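(* Let $n\ge 1$, $L>0$, $D\subseteq\mathbb{R}$ compact, and let $T$ be an input-dependent CPTP map on $n$ qubits (for each $x\in D\cap[-L,L]$, $T(x)$ is a CPTP map on $2^n\times 2^n$ complex matrices) such that for some $0<\epsilon\le1$ and all $x\in D\cap[-L,L]$, $\sup_{A\in H_0(2^n),A\ne0}\|T(x)A\|_2/\|A\|_2\le 1-\epsilon$, where $H_0(2^n)$ is the space of traceless Hermitian $2^n\times 2^n$ matrices. Let $h$ be any real-valued function on the set $\mathcal{D}(\mathbb{C}^{2^n})$ of density operators. Then for every $u\in K_L(D)$ and every $k\in\mathbb{Z}$, and every choice of density operators $\rho_{-N}\in\mathcal{D}(\mathbb{C}^{2^n})$, $N\ge 0$, the limit $$\lim_{N\to\infty} T(u_k)T(u_{k-1})\cdots T(u_{k-N})\,\rho_{-N}$$ exists in $\mathcal{D}(\mathbb{C}^{2^n})$ (with respect to $\|\cdot\|_2$) and is independent of the choice of the $\rho_{-N}$. Consequently the filter $M_h^T:K_L(D)\to\mathbb{R}^{\mathbb{Z}}$, $M_h^T(u)_k=h\big(\lim_{N\to\infty}T(u_k)T(u_{k-1})\cdots T(u_{k-N})\rho_{-N}\big)$, is well-defined.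
   Context: $\|\cdot\|_2$ is the Schatten 2-norm. $K_L(D)$ is the set of real sequences $\{u_k\}_{k\in\mathbb{Z}}$ with $u_k\in D\cap[-L,L]$ for all $k$; $\mathbb{R}^{\mathbb{Z}}$ is the set of real bi-infinite sequences. *)

(* Defs.v *)
From HB Require Import structures.
From mathcomp Require Import all_boot all_order all_algebra.
From mathcomp Require Import all_classical all_reals all_analysis.
From mathcomp Require Import complex.

Set Implicit Arguments.
Unset Strict Implicit.
Unset Printing Implicit Defensive.

Import Order.TTheory GRing.Theory Num.Theory.
Local Open Scope ring_scope.
Local Open Scope classical_set_scope.

Section QDefs.
Variable R : realType.
Local Notation C := (R[i]).

Definition adjmx (m k : nat) (A : 'M[C]_(m, k)) : 'M[C]_(k, m) :=
  \matrix_(i, j) (A j i)^*.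

Definition hermitian (N : nat) (A : 'M[C]_N) : Prop := adjmx A = A.

Definition psd (N : nat) (A : 'M[C]_N) : Prop :=
  hermitian A /\ forall x : 'cV[C]_N, 0 <= (adjmx x *m A *m x) 0 0.

Definition density (N : nat) (A : 'M[C]_N) : Prop := psd A /\ \tr A = 1.

Definition traceless_herm (N : nat) (A : 'M[C]_N) : Prop :=
  hermitian A /\ \tr A = 0.

Definition schatten2 (N : nat) (A : 'M[C]_N) : R :=
  Num.sqrt (complex.Re (\tr (adjmx A *m A))).

Definition lin_map (N : nat) (T : 'M[C]_N -> 'M[C]_N) : Prop :=
  forall (a : C) (A B : 'M[C]_N), T (a *: A + B) = a *: T A + T B.

Definition trace_preserving (N : nat) (T : 'M[C]_N -> 'M[C]_N) : Prop :=
  forall A, \tr (T A) = \tr A.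

(* id_m (x) T acting on an (m N) x (m N) matrix viewed as m x m blocks *)
Definition ampliation (N m : nat) (T : 'M[C]_N -> 'M[C]_N)
    (X : 'M[C]_(\sum_(i < m) N)) : 'M[C]_(\sum_(i < m) N) :=
  \mxblock_(i < m, j < m) T (submxblock X i j).

Definition completely_positive (N : nat) (T : 'M[C]_N -> 'M[C]_N) : Prop :=
  forall (m : nat) (X : 'M[C]_(\sum_(i < m) N)), psd X -> psd (ampliation T X).

Definition CPTP (N : nat) (T : 'M[C]_N -> 'M[C]_N) : Prop :=
  [/\ lin_map T, completely_positive T & trace_preserving T].

Definition KL (L : R) (D : set R) (u : int -> R) : Prop :=
  forall k, D (u k) /\ `|u k| <= L.

(* evol T u k N rho = T(u_k) T(u_{k-1}) ... T(u_{k-N}) rho *)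
Fixpoint evol (N : nat) (T : R -> 'M[C]_N -> 'M[C]_N) (u : int -> R) (k : int)
    (M : nat) (rho : 'M[C]_N) : 'M[C]_N :=
  match M with
  | 0 => T (u k) rho
  | M'.+1 => evol T u k M' (T (u (k - M%:Z)) rho)
  end.

End QDefs.

(* Main.v *)
Require Import Defs.
From HB Require Import structures.
From mathcomp Require Import all_boot all_order all_algebra.
From mathcomp Require Import all_classical all_reals all_analysis.
From mathcomp Require Import complex.
From mathcomp Require Import ring lra.
Set Implicit Arguments.
Unset Strict Implicit.
Unset Printing Implicit Defensive.
Import Order.TTheory GRing.Theory Num.Theory.
Import numFieldTopology.Exports numFieldNormedType.Exports.
Local Open Scope ring_scope.
Local Open Scope classical_set_scope.

Section Aux.
Variable R : realType.
Local Notation C := (R[i]).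
Local Notation Re := (@complex.Re R).
Local Notation Im := (@complex.Im R).

Lemma ReD (x y : C) : Re (x + y) = Re x + Re y. Proof. by case: x; case: y. Qed.
Lemma ImD (x y : C) : Im (x + y) = Im x + Im y. Proof. by case: x; case: y. Qed.
Lemma ReN (x : C) : Re (- x) = - Re x. Proof. by case: x. Qed.
Lemma ImN (x : C) : Im (- x) = - Im x. Proof. by case: x. Qed.
Lemma ReB (x y : C) : Re (x - y) = Re x - Re y. Proof. by rewrite ReD ReN. Qed.
Lemma ImB (x y : C) : Im (x - y) = Im x - Im y. Proof. by rewrite ImD ImN. Qed.
Lemma ReM (x y : C) : Re (x * y) = Re x * Re y - Im x * Im y. Proof. by case: x; case: y. Qed.
Lemma ImM (x y : C) : Im (x * y) = Re x * Im y + Im x * Re y. Proof. by case: x => a b; case: y => c d /=; reflexivity. Qed.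
Lemma ReJ (x : C) : Re (x^*) = Re x. Proof. by case: x. Qed.
Lemma ImJ (x : C) : Im (x^*) = - Im x. Proof. by case: x. Qed.
Lemma Re0 : Re 0 = 0. Proof. by []. Qed.
Lemma Im0 : Im 0 = 0. Proof. by []. Qed.
Lemma Re1 : Re 1 = 1. Proof. by []. Qed.
Lemma Im1 : Im 1 = 0. Proof. by []. Qed.
Lemma Re_sum (I : Type) (r : seq I) (P : pred I) (F : I -> C) :
  Re (\sum_(i <- r | P i) F i) = \sum_(i <- r | P i) Re (F i).
Proof. exact: (big_morph _ ReD Re0). Qed.
Lemma Im_sum (I : Type) (r : seq I) (P : pred I) (F : I -> C) :
  Im (\sum_(i <- r | P i) F i) = \sum_(i <- r | P i) Im (F i).
Proof. exact: (big_morph _ ImD Im0). Qed.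
Lemma complex_ext (x y : C) : Re x = Re y -> Im x = Im y -> x = y.
Proof. by case: x; case: y => a b c d /= -> ->. Qed.
End Aux.
Section Sq.
Variable R : realType.
Variable p : nat.
Local Notation C := (R[i]).
Local Notation Re := (@complex.Re R).
Local Notation Im := (@complex.Im R).
Local Notation M := 'M[C]_p.

Definition sq (A : M) : R := \sum_i \sum_j (Re (A i j) ^+ 2 + Im (A i j) ^+ 2).

Lemma schatten2E (A : M) : schatten2 A = Num.sqrt (sq A).
Proof.
rewrite /schatten2 /sq; congr Num.sqrt.
rewrite /mxtrace Re_sum exchange_big /=; apply: eq_bigr => j _.
rewrite mxE Re_sum; apply: eq_bigr => i _.
by rewrite mxE ReM ReJ ImJ; lra.
Qed.

Lemma sq_ge0 (A : M) : 0 <= sq A.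
Proof. by apply: sumr_ge0 => i _; apply: sumr_ge0 => j _; rewrite addr_ge0 // sqr_ge0. Qed.

Lemma sum_ge_term (I : finType) (F : I -> R) i0 : (forall i, 0 <= F i) -> F i0 <= \sum_i F i.
Proof. by move=> H; rewrite (bigD1 i0) //= lerDl sumr_ge0. Qed.

Lemma term_le_sq (A : M) i j : Re (A i j) ^+ 2 + Im (A i j) ^+ 2 <= sq A.
Proof.
rewrite /sq.
have h1 := sum_ge_term (F := fun i => \sum_j (Re (A i j) ^+ 2 + Im (A i j) ^+ 2)) i.
have h2 := sum_ge_term (F := fun j => (Re (A i j) ^+ 2 + Im (A i j) ^+ 2)) j.
apply: le_trans (h1 _); first by apply: h2 => l; rewrite addr_ge0 // sqr_ge0.
by move=> k; apply: sumr_ge0 => l _; rewrite addr_ge0 // sqr_ge0.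
Qed.

Lemma Re_le_s2 (A : M) i j : `|Re (A i j)| <= schatten2 A.
Proof.
rewrite schatten2E -sqrtr_sqr; apply: ler_wsqrtr.
have := term_le_sq A i j; have := sqr_ge0 (Im (A i j)); lra.
Qed.

Lemma Im_le_s2 (A : M) i j : `|Im (A i j)| <= schatten2 A.
Proof.
rewrite schatten2E -sqrtr_sqr; apply: ler_wsqrtr.
have := term_le_sq A i j; have := sqr_ge0 (Re (A i j)); lra.
Qed.

Definition close (A : M) (d : R) := forall i j, `|Re (A i j)| <= d /\ `|Im (A i j)| <= d.

Definition Bc : R := Num.sqrt ((p * p * 2)%N%:R).

Lemma Bc_ge0 : 0 <= Bc. Proof. exact: sqrtr_ge0. Qed.

Lemma close_s2 (A : M) d : 0 <= d -> close A d -> schatten2 A <= Bc * d.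
Proof.
move=> d0 H; rewrite schatten2E /Bc -(ger0_norm d0) -sqrtr_sqr -sqrtrM ?ler0n //.
apply: ler_wsqrtr.
have -> : (p * p * 2)%N%:R * d ^+ 2 = \sum_(i < p) \sum_(j < p) (d ^+ 2 + d ^+ 2).
  rewrite sumr_const card_ord sumr_const card_ord -mulr_natl !natrM; lra.
apply: ler_sum => i _; apply: ler_sum => j _.
have [h1 h2] := H i j.
move: h1 h2; rewrite !ler_norml => /andP[a1 a2] /andP[b1 b2].
apply: lerD; nra.
Qed.

End Sq.
Arguments Bc {R}.
Section Sq2.
Variable R : realType.
Variable p : nat.
Local Notation C := (R[i]).
Local Notation Re := (@complex.Re R).
Local Notation Im := (@complex.Im R).
Local Notation M := 'M[C]_p.

Lemma s2_ge0 (A : M) : 0 <= schatten2 A.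
Proof. by rewrite schatten2E sqrtr_ge0. Qed.

Lemma s2_0 : schatten2 (0 : M) = 0.
Proof.
rewrite schatten2E /sq big1 ?sqrtr0 // => i _; rewrite big1 // => j _.
by rewrite mxE expr0n /= addr0.
Qed.

Lemma s2_gt0 (A : M) : A != 0 -> 0 < schatten2 A.
Proof.
move=> nz; rewrite lt_neqAle s2_ge0 andbT; apply/eqP => h.
move/eqP: nz; apply; apply/matrixP => i j; rewrite mxE.
have := term_le_sq A i j; rewrite schatten2E in h.
have h2 : sq A = 0.
  by have := sqr_sqrtr (sq_ge0 A); rewrite -h expr0n /= => <-.
rewrite h2 => hle.
have a0 := sqr_ge0 (Re (A i j)); have b0 := sqr_ge0 (Im (A i j)).
have ha : Re (A i j) ^+ 2 = 0 by lra.
have hb : Im (A i j) ^+ 2 = 0 by lra.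
apply: complex_ext; rewrite ?Re0 ?Im0.
  by move/eqP: ha; rewrite sqrf_eq0 => /eqP.
by move/eqP: hb; rewrite sqrf_eq0 => /eqP.
Qed.

Lemma close_s2A (A : M) : close A (schatten2 A).
Proof. by move=> i j; split; [apply: Re_le_s2 | apply: Im_le_s2]. Qed.

Lemma close_le (A : M) a b : a <= b -> close A a -> close A b.
Proof. by move=> ab H i j; have [h1 h2] := H i j; split; apply: le_trans ab. Qed.

Lemma close_B (A B : M) a b : close A a -> close B b -> close (A - B) (a + b).
Proof.
move=> HA HB i j; have [a1 a2] := HA i j; have [b1 b2] := HB i j.
rewrite !mxE ReB ImB; split.
  by apply: le_trans (ler_normB _ _) _; apply: lerD.
by apply: le_trans (ler_normB _ _) _; apply: lerD.
Qed.

Lemma close_N (A : M) a : close A a -> close (- A) a.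
Proof. by move=> HA i j; have [a1 a2] := HA i j; rewrite !mxE ReN ImN !normrN. Qed.

Lemma ReBm (A B : M) i j : Re ((A - B) i j) = Re (A i j) - Re (B i j).
Proof. rewrite !mxE; exact: ReB. Qed.
Lemma ImBm (A B : M) i j : Im ((A - B) i j) = Im (A i j) - Im (B i j).
Proof. rewrite !mxE; exact: ImB. Qed.
End Sq2.
Section Mat.
Variable R : realType.
Variable p : nat.
Local Notation C := (R[i]).
Local Notation Re := (@complex.Re R).
Local Notation Im := (@complex.Im R).
Local Notation M := 'M[C]_p.

Lemma adjmxD m k (A B : 'M[C]_(m, k)) : adjmx (A + B) = adjmx A + adjmx B.
Proof. by apply/matrixP => i j; rewrite !mxE rmorphD. Qed.

Lemma adjmxN m k (A : 'M[C]_(m, k)) : adjmx (- A) = - adjmx A.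
Proof. by apply/matrixP => i j; rewrite !mxE raddfN. Qed.

Lemma adjmxZ m k (c : C) (A : 'M[C]_(m, k)) : adjmx (c *: A) = c^* *: adjmx A.
Proof. by apply/matrixP => i j; rewrite !mxE rmorphM. Qed.

Lemma herm_B (A B : M) : Defs.hermitian A -> Defs.hermitian B -> Defs.hermitian (A - B).
Proof. rewrite /Defs.hermitian => hA hB. rewrite adjmxD adjmxN. rewrite hA. rewrite hB. by []. Qed.

Lemma herm_entry (A : M) i j : Defs.hermitian A -> A j i = (A i j)^*.
Proof. by move=> h; rewrite -[in LHS]h mxE. Qed.

Lemma qform (x y : 'cV[C]_p) (A : M) :
  (adjmx x *m A *m y) 0 0 = \sum_k \sum_l ((x k 0)^* * A k l * y l 0).
Proof.
rewrite mxE exchange_big /=; apply: eq_bigr => l _.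
rewrite mxE mulr_suml; apply: eq_bigr => k _.
by rewrite mxE.
Qed.

Definition ev (k : 'I_p) : 'cV[C]_p := \col_l ((l == k)%:R).

Lemma sumd (F : 'I_p -> C) i : \sum_k ((k == i)%:R * F k) = F i.
Proof.
rewrite (bigD1 i) //= eqxx mul1r big1 ?addr0 // => k /negbTE ->.
by rewrite mul0r.
Qed.

Lemma Bev (A : M) i j : (adjmx (ev i) *m A *m ev j) 0 0 = A i j.
Proof.
rewrite qform.
have -> : \sum_k \sum_l ((ev i k 0)^* * A k l * ev j l 0) =
   \sum_k ((k == i)%:R * (\sum_l ((l == j)%:R * A k l))).
  apply: eq_bigr => k _; rewrite mulr_sumr; apply: eq_bigr => l _.
  by rewrite !mxE rmorph_nat -mulrA [A k l * _]mulrC.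
rewrite sumd; exact: sumd.
Qed.

Lemma mx_addE m k (X Y : 'M[C]_(m, k)) a b : (X + Y) a b = X a b + Y a b.
Proof. by rewrite mxE. Qed.
Lemma mx_scaleE m k (c : C) (X : 'M[C]_(m, k)) a b : (c *: X) a b = c * X a b.
Proof. by rewrite mxE. Qed.

Lemma Bexp (A : M) i j (c : C) :
  (adjmx (ev i + c *: ev j) *m A *m (ev i + c *: ev j)) 0 0 =
  A i i + c * A i j + c^* * A j i + c^* * c * A j j.
Proof.
rewrite adjmxD adjmxZ !mulmxDl !mulmxDr -!scalemxAl -!scalemxAr -?scalemxAl.
rewrite !mx_addE !mx_scaleE !Bev; ring.
Qed.

End Mat.
Arguments ev {R p}.
Section Dens.
Variable R : realType.
Variable p : nat.
Local Notation C := (R[i]).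
Local Notation Re := (@complex.Re R).
Local Notation Im := (@complex.Im R).
Local Notation M := 'M[C]_p.

Lemma ge0C (z : C) : 0 <= z -> Im z = 0 /\ 0 <= Re z.
Proof. by case: z => a b; rewrite lecE /= => /andP[/eqP <- ->]. Qed.

Lemma dens_diag (A : M) i : Defs.density A -> Im (A i i) = 0 /\ 0 <= Re (A i i) <= 1.
Proof.
move=> [[hA pA] tA].
have := pA (ev i); rewrite Bev => /ge0C [h1 h2]; split => //.
rewrite h2 /=.
have : Re (\tr A) = 1 by rewrite tA.
rewrite /mxtrace Re_sum => <-.
apply: (sum_ge_term (F := fun k => Re (A k k))) => k.
by have := pA (ev k); rewrite Bev => /ge0C [].
Qed.

Lemma dens_bound (A : M) i j : Defs.density A -> `|Re (A i j)| <= 1 /\ `|Im (A i j)| <= 1.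
Proof.
move=> dA; have [[hA pA] tA] := dA.
have [di1 di2] := dens_diag i dA; have [dj1 dj2] := dens_diag j dA.
have Q c := pA (ev i + c *: ev j).
have eji := herm_entry i j hA.
have Qr : forall c, 0 <= Re (A i i) + 2 * (Re c * Re (A i j) - Im c * Im (A i j)) + (Re c ^+ 2 + Im c ^+ 2) * Re (A j j).
  move=> c; have := Q c; rewrite Bexp eji => /ge0C [_].
  rewrite !ReD !ReM !ImM !ReJ !ImJ dj1; nra.
have q1 := Qr 1; have q2 := Qr (-1); have q3 := Qr 'i%C; have q4 := Qr (- 'i%C).
move: q1 q2 q3 q4; rewrite !ReN !ImN /=.
move: di2 dj2 => /andP[a1 a2] /andP[b1 b2].
rewrite !ler_norml; move=> q1 q2 q3 q4; split; apply/andP; split; nra.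
Qed.

End Dens.
Section CP.
Variable R : realType.
Local Notation C := (R[i]).

Lemma psd_cast m k (e : m = k) (A : 'M[C]_k) : Defs.psd A -> Defs.psd (castmx (esym e, esym e) A).
Proof. by case: k / e A => A; rewrite castmx_id. Qed.

Lemma psd_cast' m k (e : m = k) (A : 'M[C]_k) : Defs.psd (castmx (esym e, esym e) A) -> Defs.psd A.
Proof. by case: k / e A => A; rewrite castmx_id. Qed.

Lemma sum1 p : (\sum_(i < 1) p)%N = p.
Proof. by rewrite big_ord1. Qed.

Lemma block1E p (A : 'M[C]_p) :
  mxblock (fun (i j : 'I_1) => A) = castmx (esym (sum1 p), esym (sum1 p)) A.
Proof.
apply/matrixP => s t; rewrite castmxE !mxE /=.
have H : forall u : 'I_(\sum_(i < 1) p), tagnat.sig2 u = cast_ord (esym (esym (sum1 p))) u.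
  move=> u; apply: val_inj => /=.
  rewrite [in RHS](tagnat.rect u).
  by rewrite big1 // => i; rewrite (ord1 i) (ord1 (tagnat.sig1 u)).
by rewrite !H.
Qed.
Lemma cp_psd p (T' : 'M[C]_p -> 'M[C]_p) (A : 'M[C]_p) :
  Defs.completely_positive T' -> Defs.psd A -> Defs.psd (T' A).
Proof.
move=> cp pA.
have h : ampliation T' (mxblock (fun i j : 'I_1 => A)) = mxblock (fun i j : 'I_1 => T' A).
  by rewrite /ampliation; apply: eq_mxblock => i j; rewrite mxblockK.
have := cp 1%N (mxblock (fun i j : 'I_1 => A)).
rewrite h !block1E => /(_ (psd_cast (sum1 p) pA)).
exact: psd_cast'.
Qed.

Lemma cptp_dens p (T' : 'M[C]_p -> 'M[C]_p) (A : 'M[C]_p) :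
  Defs.CPTP T' -> Defs.density A -> Defs.density (T' A).
Proof.
by case=> _ cp tp [pA tA]; split; [apply: cp_psd | rewrite tp].
Qed.

Lemma lin0 p (T' : 'M[C]_p -> 'M[C]_p) : lin_map T' -> T' 0 = 0.
Proof.
move=> l; have := l 1 0 0; rewrite !scale1r addr0 => h.
by apply: (@addrI _ (T' 0)); rewrite addr0 -h.
Qed.

Lemma linB p (T' : 'M[C]_p -> 'M[C]_p) A B : lin_map T' -> T' (A - B) = T' A - T' B.
Proof.
move=> l; have := l 1 A (- B); rewrite !scale1r => ->.
have := l (-1) B 0; rewrite addr0 lin0 // addr0 !scaleN1r => ->.
by [].
Qed.
End CP.
Section Real.
Variable R : realType.

Lemma pow_small (r e : R) : 0 <= r -> r < 1 -> 0 < e -> exists N : nat, r ^+ N < e.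
Proof.
move=> r0 r1 e0.
have := @cvg_expr R r; rewrite ger0_norm // => /(_ r1).
move=> /cvgr_dist_lt /(_ e e0) [N _ HN].
exists N; have := HN N (leqnn N) => /=.
by rewrite sub0r normrN ger0_norm // exprn_ge0.
Qed.

Lemma geom_lim (x : nat -> R) (c r : R) : 0 <= r -> r < 1 ->
  (forall N M, (N <= M)%N -> `|x M - x N| <= c * r ^+ N) ->
  forall N, `|x N - lim (x @ \oo)| <= c * r ^+ N.
Proof.
move=> r0 r1 H.
have c0 : 0 <= c by have := H 0%N 0%N (leqnn _); rewrite subrr normr0 expr0 mulr1.
have cx : cvg (x @ \oo).
  apply: cauchy_cvg; apply: cauchy_exP => e e0.
  have e1 : 0 < e / (c + 1) by rewrite divr_gt0 // ltr_wpDl.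
  have [N HN] := pow_small r0 r1 e1.
  exists (x N); exists N => // M /= NM.
  rewrite -ball_normE /= distrC.
  apply: (le_lt_trans (H _ _ NM)).
  have : c * r ^+ N <= (c + 1) * r ^+ N by rewrite ler_wpM2r ?exprn_ge0 // lerDl.
  move=> /le_lt_trans; apply.
  by rewrite mulrC -ltr_pdivlMr // ltr_wpDl.
move=> N.
have Hl : forall M, (N <= M)%N -> x N - c * r ^+ N <= x M <= x N + c * r ^+ N.
  move=> M /H; rewrite ler_distlC => /andP[a b].
  apply/andP; split; lra.
have h1 : x N - c * r ^+ N <= lim (x @ \oo).
  apply: limr_ge => //; exists N => // M /= NM.
  by case/andP: (Hl M NM).
have h2 : lim (x @ \oo) <= x N + c * r ^+ N.
  apply: limr_le => //; exists N => // M /= NM.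
  by case/andP: (Hl M NM).
rewrite ler_distlC; apply/andP; split; lra.
Qed.

Lemma ge_small (c r y : R) : 0 <= c -> 0 <= r -> r < 1 ->
  (forall N, - (c * r ^+ N) <= y) -> 0 <= y.
Proof.
move=> c0 r0 r1 H; rewrite leNgt; apply/negP => y0.
have e1 : 0 < (- y) / (c + 1) by rewrite divr_gt0 ?oppr_gt0 // ltr_wpDl.
have [N HN] := pow_small r0 r1 e1.
move: HN; rewrite ltr_pdivlMr ?ltr_wpDl // => HN.
have := H N.
have : c * r ^+ N <= (c + 1) * r ^+ N by rewrite ler_wpM2r ?exprn_ge0 // lerDl.
rewrite [r ^+ N * _]mulrC in HN.
lra.
Qed.

Lemma zero_small (c r y : R) : 0 <= c -> 0 <= r -> r < 1 ->
  (forall N, - (c * r ^+ N) <= y <= c * r ^+ N) -> y = 0.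
Proof.
move=> c0 r0 r1 H; apply/eqP; rewrite eq_le; apply/andP; split.
  rewrite -oppr_ge0; apply: (ge_small c0 r0 r1) => N.
  by case/andP: (H N) => _ h; rewrite lerN2.
by apply: (ge_small c0 r0 r1) => N; case/andP: (H N).
Qed.

Lemma lin_term (w1 w2 a b d : R) : `|a| <= d -> `|b| <= d ->
  - ((`|w1| + `|w2|) * d) <= w1 * a + w2 * b <= (`|w1| + `|w2|) * d.
Proof.
move=> ha hb.
have h1 : `|w1 * a| <= `|w1| * d by rewrite normrM ler_wpM2l.
have h2 : `|w2 * b| <= `|w2| * d by rewrite normrM ler_wpM2l.
move: h1 h2; rewrite !ler_norml => /andP[h1 h1'] /andP[h2 h2'].
apply/andP; split; lra.
Qed.

Lemma sum_bound (I : finType) (F G : I -> R) d :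
  (forall i, - (G i * d) <= F i <= G i * d) ->
  - ((\sum_i G i) * d) <= \sum_i F i <= (\sum_i G i) * d.
Proof.
move=> H; rewrite mulr_suml -sumrN; apply/andP; split; apply: ler_sum => i _;
  by case/andP: (H i).
Qed.

End Real.
Section Rho0.
Variable R : realType.
Variable p : nat.
Local Notation C := (R[i]).
Local Notation Re := (@complex.Re R).
Local Notation Im := (@complex.Im R).

Definition rho0 : 'M[C]_p := (p%:R)^-1 *: 1%:M.

Lemma rho0_dens : (0 < p)%N -> Defs.density rho0.
Proof.
move=> p0.
have c0 : 0 <= (p%:R : C)^-1 by rewrite invr_ge0 ler0n.
have cJ : ((p%:R : C)^-1)^* = (p%:R)^-1 by rewrite fmorphV rmorph_nat.
split; last first.
  by rewrite /rho0 mxtraceZ mxtrace1 mulVf // pnatr_eq0 -lt0n.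
split.
  rewrite /Defs.hermitian /rho0 adjmxZ cJ; congr (_ *: _).
  apply/matrixP => i j; rewrite !mxE rmorphMn rmorph1 eq_sym //.
move=> x; rewrite /rho0 scalemx1 mul_mx_scalar -scalemxAl mx_scaleE.
apply: mulr_ge0 => //; rewrite mxE; apply: sumr_ge0 => k _.
by rewrite mxE mulrC mul_conjC_ge0.
Qed.
End Rho0.
Arguments rho0 {R p}.
Arguments rho0_dens {R p}.
Section Main.
Variable R : realType.
Variable p : nat.
Local Notation C := (R[i]).
Local Notation Re := (@complex.Re R).
Local Notation Im := (@complex.Im R).
Local Notation M := 'M[C]_p.

Definition aseq (T : R -> M -> M) (u : int -> R) (k : int) (N : nat) : M :=
  evol T u k N rho0.

Definition LimF (T : R -> M -> M) (u : int -> R) (k : int) : M :=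
  \matrix_(i, j) @Complex R (lim ((fun N => Re (aseq T u k N i j)) @ \oo))
                            (lim ((fun N => Im (aseq T u k N i j)) @ \oo)).

Variable T : R -> M -> M.
Variables (L : R) (D : set R) (eps : R).
Hypothesis p0 : (0 < p)%N.
Hypothesis hT : forall x, D x -> `|x| <= L -> CPTP (T x).
Hypothesis e0 : 0 < eps.
Hypothesis e1 : eps <= 1.
Hypothesis hc : forall x, D x -> `|x| <= L ->
     forall A : M, traceless_herm A -> A != 0 ->
       schatten2 (T x A) / schatten2 A <= 1 - eps.
Variable u : int -> R.
Hypothesis hu : KL L D u.
Variable k : int.

Local Notation r := (1 - eps).
Lemma r0 : 0 <= r. Proof. have := e1; lra. Qed.
Lemma r1 : r < 1. Proof. have := e0; lra. Qed.

Lemma contr1 x (Dx : D x) (Lx : `|x| <= L) (A B : M) :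
  Defs.density A -> Defs.density B ->
  schatten2 (T x A - T x B) <= r * schatten2 (A - B).
Proof.
move=> [[hA pA] tA] [[hB pB] tB].
have [lT _ _] := hT Dx Lx.
case: (eqVneq (A - B) 0) => h.
  move/eqP: h; rewrite subr_eq0 => /eqP ->; rewrite !subrr s2_0 mulr0.
  by [].
rewrite -linB //.
have := hc Dx Lx (A := A - B).
rewrite ler_pdivrMr ?s2_gt0 //; apply => //.
split; first exact: herm_B.
by rewrite raddfB /= tA tB subrr.
Qed.

Lemma dom j : D (u j) /\ `|u j| <= L.
Proof. exact: hu. Qed.

Lemma evol_dens N (A : M) : Defs.density A -> Defs.density (evol T u k N A).
Proof.
elim: N A => [|N IH] A dA /=.
  by have [h1 h2] := dom k; apply: cptp_dens => //; apply: hT.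
apply: IH; have [h1 h2] := dom (k - N.+1%:Z).
by apply: cptp_dens => //; apply: hT.
Qed.

Lemma evol_contr N (A B : M) : Defs.density A -> Defs.density B ->
  schatten2 (evol T u k N A - evol T u k N B) <= r ^+ N.+1 * schatten2 (A - B).
Proof.
elim: N A B => [|N IH] A B dA dB.
  by rewrite expr1; have [h1 h2] := dom k; apply: contr1.
have [h1 h2] := dom (k - N.+1%:Z).
have dA' := cptp_dens (hT h1 h2) dA; have dB' := cptp_dens (hT h1 h2) dB.
change (schatten2 (evol T u k N (T (u (k - N.+1%:Z)) A) - evol T u k N (T (u (k - N.+1%:Z)) B))
  <= r ^+ N.+2 * schatten2 (A - B)).
apply: le_trans (IH _ _ dA' dB') _.
rewrite [r ^+ N.+2]exprS [r * _]mulrC -mulrA ler_wpM2l ?exprn_ge0 ?r0 //.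
by apply: contr1.
Qed.

Lemma evol_split P N (A : M) : Defs.density A ->
  exists A', Defs.density A' /\ evol T u k (P + N) A = evol T u k N A'.
Proof.
elim: P A => [|P IH] A dA; first by exists A.
rewrite addSn /=.
have [h1 h2] := dom (k - (P + N).+1%:Z).
exact: IH (cptp_dens (hT h1 h2) dA).
Qed.

Lemma dens_diff (A B : M) : Defs.density A -> Defs.density B ->
  schatten2 (A - B) <= Bc p * 2.
Proof.
move=> dA dB; apply: close_s2 => //.
rewrite -[2]/(1 + 1); apply: close_B => i j; [exact: dens_bound | exact: dens_bound].
Qed.

Local Notation a := (aseq T u k).
Local Notation c := (r * (Bc p * 2)).

Lemma c0 : 0 <= c.
Proof. by rewrite mulr_ge0 ?r0 // mulr_ge0 ?Bc_ge0. Qed.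

Lemma a_dens N : Defs.density (a N).
Proof. exact/evol_dens/rho0_dens. Qed.

Lemma a_cauchy N N' : (N <= N')%N -> schatten2 (a N' - a N) <= c * r ^+ N.
Proof.
move=> NN; rewrite /aseq -(subnK NN).
have [A' [dA' ->]] := evol_split (N' - N) N (rho0_dens p0).
apply: le_trans (evol_contr _ dA' (rho0_dens p0)) _.
have hd := dens_diff dA' (rho0_dens p0).
have -> : c * r ^+ N = r ^+ N.+1 * (Bc p * 2) by rewrite exprS; ring.
by rewrite ler_wpM2l ?exprn_ge0 ?r0.
Qed.

Lemma a_lim N : close (a N - LimF T u k) (c * r ^+ N).
Proof.
move=> i j; rewrite ReBm ImBm !mxE /=; split.
  apply: (geom_lim (x := fun N => Re (a N i j))) r0 r1 _ N => N1 N2 le12.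
  have := Re_le_s2 (a N2 - a N1) i j; rewrite ReBm => /le_trans; apply.
  exact: a_cauchy.
apply: (geom_lim (x := fun N => Im (a N i j))) r0 r1 _ N => N1 N2 le12.
have := Im_le_s2 (a N2 - a N1) i j; rewrite ImBm => /le_trans; apply.
exact: a_cauchy.
Qed.

Local Notation Lm := (LimF T u k).

Lemma limRe N i j : - (c * r ^+ N) <= Re (a N i j) - Re (Lm i j) <= c * r ^+ N.
Proof. by have [h _] := a_lim N i j; move: h; rewrite ReBm ler_norml. Qed.
Lemma limIm N i j : - (c * r ^+ N) <= Im (a N i j) - Im (Lm i j) <= c * r ^+ N.
Proof. by have [_ h] := a_lim N i j; move: h; rewrite ImBm ler_norml. Qed.

Lemma Lim_herm : Defs.hermitian Lm.
Proof.
rewrite /Defs.hermitian; apply/matrixP => i j; rewrite mxE.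
have hA N := herm_entry i j (proj1 (proj1 (a_dens N))).
have c2 : 0 <= 2 * c by rewrite mulr_ge0 ?c0.
apply: complex_ext; rewrite ?ReJ ?ImJ.
  apply/eqP; rewrite -subr_eq0; apply/eqP.
  apply: (@zero_small _ (2 * c) r) => //; [exact: r0 | exact: r1 |] => N.
  have := limRe N i j; have := limRe N j i; rewrite hA ReJ.
  move=> /andP[a1 a2] /andP[b1 b2]; apply/andP; split; lra.
apply/eqP; rewrite -subr_eq0; apply/eqP.
apply: (@zero_small _ (2 * c) r) => //; [exact: r0 | exact: r1 |] => N.
have := limIm N i j; have := limIm N j i; rewrite hA ImJ.
move=> /andP[a1 a2] /andP[b1 b2]; apply/andP; split; lra.
Qed.

Lemma Lim_tr : \tr Lm = 1.
Proof.
have cp : 0 <= p%:R * c by rewrite mulr_ge0 ?c0.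
have sp : \sum_(i < p) (1 : R) = p%:R by rewrite sumr_const card_ord.
apply: complex_ext; rewrite /mxtrace ?Re_sum ?Im_sum.
  apply/eqP; rewrite -subr_eq0; apply/eqP.
  apply: (@zero_small _ (p%:R * c) r) => //; [exact: r0 | exact: r1 |] => N.
  have ha : \sum_i Re (a N i i) = 1.
    by rewrite -Re_sum; have [_] := a_dens N; rewrite /mxtrace => ->.
  have hb := @sum_bound _ _ (fun i => Re (Lm i i) - Re (a N i i)) (fun _ => 1) (c * r ^+ N)
    (fun i => ltac:(have := limRe N i i; rewrite mul1r => /andP[a1 a2]; apply/andP; split; lra)).
  rewrite sumrB ha sp in hb.
  have e : p%:R * c * r ^+ N = p%:R * (c * r ^+ N) by ring.
  rewrite Re1 e; move/andP: hb => [b1 b2]; apply/andP; split; lra.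
apply/eqP; rewrite -subr_eq0; apply/eqP.
apply: (@zero_small _ (p%:R * c) r) => //; [exact: r0 | exact: r1 |] => N.
have ha : \sum_i Im (a N i i) = 0.
  by rewrite -Im_sum; have [_] := a_dens N; rewrite /mxtrace => ->.
have hb := @sum_bound _ _ (fun i => Im (Lm i i) - Im (a N i i)) (fun _ => 1) (c * r ^+ N)
  (fun i => ltac:(have := limIm N i i; rewrite mul1r => /andP[a1 a2]; apply/andP; split; lra)).
rewrite sumrB ha sp in hb.
have e : p%:R * c * r ^+ N = p%:R * (c * r ^+ N) by ring.
rewrite Im1 e; move/andP: hb => [b1 b2]; apply/andP; split; lra.
Qed.

Lemma ReQ (x : 'cV[C]_p) (A : M) :
  Re ((adjmx x *m A *m x) 0 0) = \sum_k \sum_l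
    (Re ((x k 0)^* * x l 0) * Re (A k l) + (- Im ((x k 0)^* * x l 0)) * Im (A k l)).
Proof.
rewrite qform Re_sum; apply: eq_bigr => i _; rewrite Re_sum; apply: eq_bigr => j _.
by rewrite mulrAC ReM mulNr.
Qed.

Lemma ImQ (x : 'cV[C]_p) (A : M) :
  Im ((adjmx x *m A *m x) 0 0) = \sum_k \sum_l
    (Re ((x k 0)^* * x l 0) * Im (A k l) + Im ((x k 0)^* * x l 0) * Re (A k l)).
Proof.
rewrite qform Im_sum; apply: eq_bigr => i _; rewrite Im_sum; apply: eq_bigr => j _.
by rewrite mulrAC ImM.
Qed.

Lemma dsum_bound (F G : 'I_p -> 'I_p -> R) d :
  (forall k l, - (G k l * d) <= F k l <= G k l * d) ->
  - ((\sum_k \sum_l G k l) * d) <= \sum_k \sum_l F k l <= (\sum_k \sum_l G k l) * d.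
Proof. by move=> H; apply: sum_bound => i; apply: sum_bound => j; apply: H. Qed.

Lemma Lim_psd : Defs.psd Lm.
Proof.
split; first exact: Lim_herm.
move=> x.
pose w k l := (x k 0)^* * x l 0.
pose W := \sum_k1 \sum_l (`|Re (w k1 l)| + `|- Im (w k1 l)|).
have W0 : 0 <= W by apply: sumr_ge0 => i _; apply: sumr_ge0 => j _; rewrite addr_ge0.
have Wc : 0 <= W * c by rewrite mulr_ge0 ?c0.
have e N : W * c * r ^+ N = W * (c * r ^+ N) by ring.
have Hre N : - (W * (c * r ^+ N)) <=
    Re ((adjmx x *m Lm *m x) 0 0) - Re ((adjmx x *m a N *m x) 0 0) <= W * (c * r ^+ N).
  rewrite !ReQ -sumrB.
  under eq_bigr => i _ do rewrite -sumrB.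
  apply: dsum_bound => k1 l.
  have h1 : `|Re (Lm k1 l) - Re (a N k1 l)| <= c * r ^+ N by rewrite distrC ler_norml limRe.
  have h2 : `|Im (Lm k1 l) - Im (a N k1 l)| <= c * r ^+ N by rewrite distrC ler_norml limIm.
  have := lin_term (Re (w k1 l)) (- Im (w k1 l)) h1 h2.
  rewrite /w => /andP[b1 b2]; apply/andP; split; lra.
have Him N : - (W * (c * r ^+ N)) <=
    Im ((adjmx x *m Lm *m x) 0 0) - Im ((adjmx x *m a N *m x) 0 0) <= W * (c * r ^+ N).
  rewrite !ImQ -sumrB.
  under eq_bigr => i _ do rewrite -sumrB.
  apply: dsum_bound => k1 l.
  have h1 : `|Im (Lm k1 l) - Im (a N k1 l)| <= c * r ^+ N by rewrite distrC ler_norml limIm.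
  have h2 : `|Re (Lm k1 l) - Re (a N k1 l)| <= c * r ^+ N by rewrite distrC ler_norml limRe.
  have := lin_term (Re (w k1 l)) (Im (w k1 l)) h1 h2.
  rewrite normrN /w => /andP[b1 b2]; apply/andP; split; lra.
have pa N := ge0C ((proj2 (proj1 (a_dens N))) x).
rewrite lecE; apply/andP; split.
  rewrite Im0; apply/eqP.
  apply: (@zero_small _ (W * c) r) => //; [exact: r0 | exact: r1 |] => N.
  have [z1 _] := pa N; have := Him N; rewrite z1 subr0 e //.
rewrite Re0; apply: (@ge_small _ (W * c) r) => //; [exact: r0 | exact: r1 |] => N.
have [_ z2] := pa N; have := Hre N; rewrite e => /andP[b1 b2]; lra.
Qed.

Lemma Lim_dens : Defs.density Lm.
Proof. by split; [exact: Lim_psd | exact: Lim_tr]. Qed.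

Lemma Lim_conv (rho : nat -> M) : (forall N, Defs.density (rho N)) ->
  forall e : R, 0 < e -> exists N0 : nat, forall N : nat, (N0 <= N)%N ->
    schatten2 (evol T u k N (rho N) - Lm) < e.
Proof.
move=> drho e epos.
have K0 : 0 <= Bc p * (2 * c) by rewrite mulr_ge0 ?Bc_ge0 // mulr_ge0 ?c0.
have e2 : 0 < e / (Bc p * (2 * c) + 1) by rewrite divr_gt0 // ltr_wpDl.
have [N0 HN0] := pow_small r0 r1 e2.
exists N0 => N N0N.
have hrN : r ^+ N <= r ^+ N0 by apply: ler_wiXn2l => //; [exact: r0 | apply: ltW; exact: r1].
have rN0 : 0 <= r ^+ N by rewrite exprn_ge0 ?r0.
have h1 : schatten2 (evol T u k N (rho N) - a N) <= c * r ^+ N.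
  apply: le_trans (evol_contr _ (drho N) (rho0_dens p0)) _.
  have hd := dens_diff (drho N) (rho0_dens p0).
  have -> : c * r ^+ N = r ^+ N.+1 * (Bc p * 2) by rewrite exprS; ring.
  by rewrite ler_wpM2l ?exprn_ge0 ?r0.
have h2 : close (evol T u k N (rho N) - a N - (Lm - a N)) (c * r ^+ N + c * r ^+ N).
  apply: close_B; first exact: close_le h1 (close_s2A _).
  by rewrite -opprB; apply: close_N; exact: a_lim.
have -> : evol T u k N (rho N) - Lm = evol T u k N (rho N) - a N - (Lm - a N).
  by rewrite opprB addrA subrK.
apply: le_lt_trans (close_s2 _ h2) _.
  by rewrite addr_ge0 // mulr_ge0 ?c0.
move: HN0; rewrite ltr_pdivlMr ?ltr_wpDl // => HN0.
have : Bc p * (2 * c) * r ^+ N <= Bc p * (2 * c) * r ^+ N0 by rewrite ler_wpM2l.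
have -> : Bc p * (c * r ^+ N + c * r ^+ N) = Bc p * (2 * c) * r ^+ N by ring.
move=> h3; apply: le_lt_trans h3 _.
have : 0 <= r ^+ N0 by rewrite exprn_ge0 ?r0.
nra.
Qed.

End Main.

Theorem lemma1 (R : realType) (n : nat) (L : R) (D : set R)
  (T : R -> 'M[R[i]]_(2 ^ n) -> 'M[R[i]]_(2 ^ n)) (eps : R) :
  (1 <= n)%N -> 0 < L -> compact D ->
  (forall x, D x -> `|x| <= L -> CPTP (T x)) ->
  0 < eps -> eps <= 1 ->
  (forall x, D x -> `|x| <= L ->
     forall A : 'M[R[i]]_(2 ^ n), traceless_herm A -> A != 0 ->
       schatten2 (T x A) / schatten2 A <= 1 - eps) ->
  exists Lim : (int -> R) -> int -> 'M[R[i]]_(2 ^ n),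
    forall (u : int -> R) (k : int), KL L D u ->
      density (Lim u k) /\
      forall rho : nat -> 'M[R[i]]_(2 ^ n), (forall N, density (rho N)) ->
        forall e : R, 0 < e -> exists N0 : nat, forall N : nat, (N0 <= N)%N ->
          schatten2 (evol T u k N (rho N) - Lim u k) < e.
Proof.
move=> n1 L0 cD hT e0 e1 hc.
have p0 : (0 < 2 ^ n)%N by rewrite expn_gt0.
exists (LimF T) => u k hu; split.
  exact: (Lim_dens p0 hT e0 e1 hc hu).
exact: (Lim_conv p0 hT e0 e1 hc hu).
Qed.
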